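(* If $\mathcal A_i$ is a yes-instance of \textsc{Restricted Subset Sum} for some $i\in\{0,\dots,t-1\}$, then there exists a set of items $\mathcal S\subseteq\mathcal X\cup\mathcal Y\cup\mathcal Z$ with $w(\mathcal S)\le W$ and $p(\mathcal S)\ge P$.
   Context: Let $n\ge1$, $B_n=\sum_{j=1}^{3n}(3n+1)^j$, $\widetilde{\mathcal A}_n=\{(3n+1)^{j_1}+(3n+1)^{j_2}+(3n+1)^{j_3}: j_1,j_2,j_3\in\{1,\dots,3n\}\}$. A set $\mathcal A=\{a_1,\dots,a_{3n}\}$ of $3n$ integers from $\widetilde{\mathcal A}_n$ with $\sum_j a_j=3B_n$ is a yes-instance of \textsc{Restricted Subset Sum} if some $\mathcal A^*\subseteq\mathcal A$ with $|\mathcal A^*|=n$ has $\sum_{a\in\mathcal A^*}a=B_n$. Let $t$ be a power of two, $\lg$ the base-2 logarithm, and for $i\in\{0,\dots,t-1\}$ let $\mathcal A_i=\{a^i_1,\dots,a^i_{3n}\}$ be such instances. Let $X=3tnB_n$, $B=B_n+nX$, $Y=3t^2nB$, $Z=(\lg t)^2Y^2 3^{(\lg t)^2}$, $T=\sum_{k=0}^{(\lg t)^2-1}3^k$, and fix a bijection $f:\{0,\dots,\lg t-1\}^2\to\{0,\dots,(\lg t)^2-1\}$. Items (weight $w$, profit $p$): encoding items $x^i_j$ ($0\le i\le t-1$, $1\le j\le 3n$) with $w=X+a^i_j$, $p=X+a^i_j+3iB$, forming $\mathcal X$; quadratization items forming $\mathcal Y$: for $0\le k<\ell\le\lg t-1$,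 $y^{1,0}_{k,\ell}$ with $w=p=3^{f(k,\ell)}Y$, $y^{0,1}_{k,\ell}$ with $w=p=3^{f(\ell,k)}Y$, $y^{1,1}_{k,\ell}$ with $w=(3^{f(k,\ell)}+3^{f(\ell,k)})Y$, $p=w+2^{k+\ell}\cdot9nB$, and for $0\le k\le\lg t-1$, $y^{1,1}_{k,k}$ with $w=3^{f(k,k)}Y$, $p=w+2^{2k}\cdot4.5nB+2^k\cdot1.5nB$; index items forming $\mathcal Z$: for $0\le k\le\lg t-1$, $z^0_k$ with $w=p=2^kZ+\sum_{\ell=0}^{\lg t-1}3^{f(k,\ell)}Y$ and $z^1_k$ with $w=p=2^kZ+2^k\cdot 3B$. For a set $\mathcal S$ of items, $w(\mathcal S)=\sum_{x\in\mathcal S}w(x)$, $p(\mathcal S)=\sum_{x\in\mathcal S}p(x)$. Finally $W=(t-1)Z+TY+(3t-2)B$ and $P=W+\binom{t}{2}\cdot 9nB$. *)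

(* Defs.v *)
From mathcomp Require Import all_boot all_order all_algebra.
Set Implicit Arguments. Unset Strict Implicit. Unset Printing Implicit Defensive.
Import GRing.Theory Num.Theory.

Definition Bn (n : nat) : nat := \sum_(1 <= j < (3 * n).+1) (3 * n + 1) ^ j.

Definition in_Atilde (n x : nat) : Prop :=
  exists j1 j2 j3 : nat,
    [/\ 1 <= j1 <= 3 * n, 1 <= j2 <= 3 * n, 1 <= j3 <= 3 * n &
        x = (3 * n + 1) ^ j1 + (3 * n + 1) ^ j2 + (3 * n + 1) ^ j3].

(* An instance A = {a_1,...,a_{3n}} is given as a : 'I_(3n) -> nat
   (index j : 'I_(3n) stands for a_{j+1}). *)
Definition RSS_instance (n : nat) (a : 'I_(3 * n) -> nat) : Prop :=
  (forall j, in_Atilde n (a j)) /\ \sum_(j < 3 * n) a j = 3 * Bn n.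

Arguments RSS_instance : clear implicits.

Definition RSS_yes (n : nat) (a : 'I_(3 * n) -> nat) : Prop :=
  RSS_instance n a /\
  exists J : {set 'I_(3 * n)}, #|J| = n /\ \sum_(j in J) a j = Bn n.

Arguments RSS_yes : clear implicits.

(* Constants; t = 2^m, m = lg t. *)
Section Constants.
Variables (n m t : nat).
Definition cX : nat := 3 * t * n * Bn n.
Definition cB : nat := Bn n + n * cX.
Definition cY : nat := 3 * t ^ 2 * n * cB.
Definition cZ : nat := m ^ 2 * cY ^ 2 * 3 ^ (m ^ 2).
Definition cT : nat := \sum_(k < m ^ 2) 3 ^ k.
Definition cW : nat := (t - 1) * cZ + cT * cY + (3 * t - 2) * cB.
Definition cP : nat := cW + 'C(t, 2) * 9 * n * cB.
End Constants.

(* The universe of item "names" (a disjoint union):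
   inl (i, j)                     : encoding item x^i_{j+1}
   inr (inl (k, l))               : y^{1,0}_{k,l}   (valid only if k < l)
   inr (inr (inl (k, l)))         : y^{0,1}_{k,l}   (valid only if k < l)
   inr (inr (inr (inl (k, l))))   : y^{1,1}_{k,l}   (valid only if k <= l)
   inr (inr (inr (inr (inl k))))  : z^0_k
   inr (inr (inr (inr (inr k))))  : z^1_k *)
Definition item (n m t : nat) : finType :=
  (('I_t * 'I_(3 * n)) +
   (('I_m * 'I_m) + (('I_m * 'I_m) + (('I_m * 'I_m) + ('I_m + 'I_m)))))%type.

Definition valid_item (n m t : nat) (x : item n m t) : bool :=
  match x with
  | inl _ => true
  | inr (inl (k, l)) => (k < l)%N
  | inr (inr (inl (k, l))) => (k < l)%N
  | inr (inr (inr (inl (k, l)))) => (k <= l)%N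
  | inr (inr (inr (inr _))) => true
  end.

Section Items.
Variables (n m t : nat) (f : 'I_m * 'I_m -> 'I_(m ^ 2))
          (a : 'I_t -> 'I_(3 * n) -> nat).

Definition weight (x : item n m t) : nat :=
  match x with
  | inl (i, j) => cX n t + a i j
  | inr (inl (k, l)) => 3 ^ f (k, l) * cY n t
  | inr (inr (inl (k, l))) => 3 ^ f (l, k) * cY n t
  | inr (inr (inr (inl (k, l)))) =>
      if (k < l)%N then (3 ^ f (k, l) + 3 ^ f (l, k)) * cY n t
      else 3 ^ f (k, k) * cY n t
  | inr (inr (inr (inr (inl k)))) =>
      2 ^ k * cZ n m t + \sum_(l < m) 3 ^ f (k, l) * cY n t
  | inr (inr (inr (inr (inr k)))) => 2 ^ k * cZ n m t + 2 ^ k * 3 * cB n t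
  end.

Local Open Scope ring_scope.

Definition profit (x : item n m t) : rat :=
  match x with
  | inl (i, j) => (cX n t + a i j + 3 * i * cB n t)%N%:R
  | inr (inr (inr (inl (k, l)))) =>
      if (k < l)%N then (weight x)%:R + (2 ^ (k + l) * 9 * n * cB n t)%N%:R
      else (weight x)%:R + (2 ^ (2 * k))%N%:R * (9 / 2) * (n * cB n t)%N%:R
                         + (2 ^ k)%N%:R * (3 / 2) * (n * cB n t)%N%:R
  | _ => (weight x)%:R
  end.

Definition wS (S : {set item n m t}) : nat := (\sum_(x in S) weight x)%N.
Definition pS (S : {set item n m t}) : rat := \sum_(x in S) profit x.
End Items.

(* Main.v *)
Require Import Defs.
From mathcomp Require Import all_boot all_order all_algebra.
From mathcomp Require Import zify ring lra.
Import GRing.Theory Num.Theory.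

Lemma sum_pow2 m : ((\sum_(k < m) 2 ^ k).+1 = 2 ^ m)%N.
Proof.
elim: m => [|m IH]; first by rewrite big_ord0.
by rewrite big_ord_recr /= -addSn IH expnS; lia.
Qed.

Lemma binexp m x :
  x = (\sum_(k < m) (if odd (x %/ 2 ^ k) then 2 ^ k else 0) + x %/ 2 ^ m * 2 ^ m)%N.
Proof.
elim: m => [|m IH]; first by rewrite big_ord0 expn0 divn1 muln1.
rewrite big_ord_recr /= {1}IH expnSr divnMA.
set q := x %/ 2 ^ m.
rewrite {1}(divn_eq q 2) modn2.
case: (odd q) => /=; nia.
Qed.

Lemma sum_pairP (R : Type) (idx : R) (op : Monoid.com_law idx) (I J : finType)
  (P : pred (I * J)) (F : I * J -> R) :
  \big[op/idx]_(p | P p) F p = \big[op/idx]_i \big[op/idx]_(j | P (i, j)) F (i, j).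
Proof.
rewrite big_mkcond (eq_bigr (fun i => \big[op/idx]_j (if P (i, j) then F (i, j) else idx))).
  by rewrite pair_big /=; apply: eq_bigr => -[i j].
by move=> i _; rewrite big_mkcond.
Qed.

Lemma ord_tail (t i0 : nat) (F : nat -> nat) : (i0 < t)%N ->
  (\sum_(i < t) (if i0 < i then F i else 0) = \sum_(i0.+1 <= i < t) F i)%N.
Proof.
move=> lt.
rewrite -big_mkcond /= -(big_mkord (fun i => i0 < i) F).
rewrite (@big_cat_nat _ _ _ i0.+1 0 t _ _ (leq0n _) lt) /=.
rewrite big_nat_cond big1 ?add0n; last first.
  by move=> i /andP[/andP[_ h1] h2]; lia.
rewrite [in LHS]big_nat_cond [in RHS]big_nat_cond.
by apply: eq_bigl => i; case: (i0 < i); rewrite ?andbT ?andbF.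
Qed.

Lemma tri k : (2 * \sum_(0 <= i < k.+1) i = k.+1 * k)%N.
Proof.
elim: k => [|k IH]; first by rewrite big_nat1.
rewrite big_nat_recr //= mulnDr IH; lia.
Qed.

Section Main.
Variables (n m t : nat) (f : 'I_m * 'I_m -> 'I_(m ^ 2))
  (a : 'I_t -> 'I_(3 * n) -> nat).
Hypothesis Ht : t = (2 ^ m)%N.
Hypothesis fbij : bijective f.
Hypothesis inst : forall i : 'I_t, RSS_instance n (a i).
Variables (i0 : 'I_t) (J : {set 'I_(3 * n)}).
Hypotheses (HJ : #|J| = n) (HJs : (\sum_(j in J) a i0 j)%N = Bn n).

Definition bb (k : 'I_m) := odd (i0 %/ 2 ^ k).

Definition sel (x : item n m t) : bool :=
  match x with
  | inl (i, j) => ((i == i0) && (j \in J)) || (i0 < i)%N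
  | inr (inl (k, l)) => [&& (k < l)%N, bb k & ~~ bb l]
  | inr (inr (inl (k, l))) => [&& (k < l)%N, ~~ bb k & bb l]
  | inr (inr (inr (inl (k, l)))) => [&& (k <= l)%N, bb k & bb l]
  | inr (inr (inr (inr (inl k)))) => ~~ bb k
  | inr (inr (inr (inr (inr k)))) => bb k
  end.

Definition SS : {set item n m t} := [set x | sel x].

Lemma S_valid : SS \subset [pred x | valid_item x].
Proof.
apply/subsetP => -[[i j]|[[k l]|[[k l]|[[k l]|[k|k]]]]]; rewrite inE //=.
- by case/andP.
- by case/andP.
- by case/andP.
Qed.

Lemma i0_bin : (i0 : nat) = (\sum_(k < m) (if bb k then 2 ^ k else 0))%N.
Proof.
rewrite {1}(binexp m i0) divn_small ?mul0n ?addn0 //.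
by rewrite -Ht.
Qed.

Lemma LX : (\sum_(i < t)
     \sum_(j < 3 * n | (i == i0) && (j \in J) || (i0 < i)) (cX n t + a i j)
   = cB n t + (t - i0.+1) * (3 * cB n t))%N.
Proof.
rewrite (eq_bigr (fun i : 'I_t => (if i == i0 then cB n t else 0) +
   (if i0 < i then 3 * cB n t else 0)))%N.
  rewrite big_split /= -big_mkcond big_pred1_eq.
  by rewrite (ord_tail t i0 (fun _ => 3 * cB n t)) // sum_nat_const_nat.
move=> i _; case: eqVneq => [->|ne].
  rewrite ltnn /= (eq_bigl (fun j => j \in J)); last by move=> j; rewrite orbF.
  rewrite big_split /= HJs sum_nat_const HJ /cB; lia.
rewrite /= add0n; case: ltnP => h.
  rewrite big_split /= sum_nat_const card_ord (inst i).2 /cB; lia.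
by rewrite big_pred0.
Qed.

Lemma LZ1 : (\sum_(i < m | ~~ bb i) 2 ^ i * cZ n m t + \sum_(i < m | bb i) 2 ^ i * cZ n m t
   = (t - 1) * cZ n m t)%N.
Proof.
rewrite [RHS](_ : _ = \sum_(i < m) 2 ^ i * cZ n m t)%N; last first.
  by rewrite -big_distrl /= Ht -sum_pow2 subSS subn0.
by rewrite [RHS](bigID bb) /= addnC.
Qed.

Lemma LZ2 : (\sum_(i < m | bb i) 2 ^ i * 3 * cB n t = 3 * cB n t * i0)%N.
Proof.
by rewrite i0_bin big_distrr /= big_mkcond /=; apply: eq_bigr => k _; case: (bb k); lia.
Qed.
Lemma dbl_mkcond (P : 'I_m -> 'I_m -> bool) (F : 'I_m -> 'I_m -> nat) :
  (\sum_i \sum_(j | P i j) F i j = \sum_i \sum_j (if P i j then F i j else 0))%N.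
Proof. by apply: eq_bigr => i _; rewrite big_mkcond. Qed.

Lemma LY :
  (\sum_(i < m) \sum_(j < m | [&& i < j, bb i & ~~ bb j]) 3 ^ f (i, j) * cY n t +
   (\sum_(i < m) \sum_(j < m | [&& i < j, ~~ bb i & bb j]) 3 ^ f (j, i) * cY n t +
    (\sum_(i < m) \sum_(j < m | [&& i <= j, bb i & bb j])
           (if i < j then (3 ^ f (i, j) + 3 ^ f (j, i)) * cY n t
            else 3 ^ f (i, i) * cY n t) +
     \sum_(i < m | ~~ bb i) \sum_(l < m) 3 ^ f (i, l) * cY n t))
  = cT m * cY n t)%N.
Proof.
have ET : (cT m * cY n t = \sum_i \sum_j 3 ^ f (i, j) * cY n t)%N.
  rewrite /cT big_distrl /= (reindex f) /=; last exact: onW_bij.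
  by rewrite pair_big /=; apply: eq_bigr => -[i j].
rewrite ET (dbl_mkcond (fun i j => [&& i < j, bb i & ~~ bb j]))
  (dbl_mkcond (fun i j => [&& i < j, ~~ bb i & bb j]))
  (dbl_mkcond (fun i j => [&& i <= j, bb i & bb j])).
have EZ : (\sum_(i < m | ~~ bb i) \sum_(l < m) 3 ^ f (i, l) * cY n t =
   \sum_i \sum_j (if ~~ bb i then 3 ^ f (i, j) * cY n t else 0))%N.
  rewrite big_mkcond; apply: eq_bigr => i _; case: (bb i) => //=.
  by rewrite big1.
have E01 : (\sum_(i < m) \sum_(j < m) (if [&& i < j, ~~ bb i & bb j] then 3 ^ f (j, i) * cY n t else 0)
   = \sum_(i < m) \sum_(j < m) (if [&& j < i, ~~ bb j & bb i] then 3 ^ f (i, j) * cY n t else 0))%N.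
  exact: exchange_big.
have E11 : (\sum_(i < m) \sum_(j < m) (if [&& i <= j, bb i & bb j] then
              (if i < j then (3 ^ f (i, j) + 3 ^ f (j, i)) * cY n t
               else 3 ^ f (i, i) * cY n t) else 0)
   = \sum_(i < m) \sum_(j < m) (if [&& i <= j, bb i & bb j] then 3 ^ f (i, j) * cY n t else 0)
   + \sum_(i < m) \sum_(j < m) (if [&& j < i, bb j & bb i] then 3 ^ f (i, j) * cY n t else 0))%N.
  rewrite [X in (_ = _ + X)%N]exchange_big /= -big_split /=.
  apply: eq_bigr => i _; rewrite -big_split /=; apply: eq_bigr => j _.
  case: ltngtP => h /=.
  - by case: (bb i); case: (bb j); rewrite //= mulnDl.
  - by case: (bb i); case: (bb j).
  - by have Eij : i = j := val_inj h; subst j; rewrite addn0.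
rewrite EZ E01 E11 -!big_split /=.
apply: eq_bigr => i _; rewrite -!big_split /=; apply: eq_bigr => j _.
case: ltngtP => h /=.
- by case: (bb i); case: (bb j) => //=; lia.
- by case: (bb i); case: (bb j) => //=; lia.
- by have Eij : i = j := val_inj h; subst j; case: (bb i) => /=; lia.
Qed.
Lemma wS_eq : wS f a SS = cW n m t.
Proof.
rewrite /wS /SS (eq_bigl sel); last by move=> x; rewrite inE.
rewrite big_sumType big_sumType big_sumType big_sumType big_sumType.
rewrite !sum_pairP /=.
have HZ0 : (\sum_(i < m | ~~ bb i) (2 ^ i * cZ n m t + \sum_(l < m) 3 ^ f (i, l) * cY n t)
  = \sum_(i < m | ~~ bb i) 2 ^ i * cZ n m t + \sum_(i < m | ~~ bb i) \sum_(l < m) 3 ^ f (i, l) * cY n t)%N.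
  by rewrite big_split.
have HZ1 : (\sum_(i < m | bb i) (2 ^ i * cZ n m t + 2 ^ i * 3 * cB n t)
  = \sum_(i < m | bb i) 2 ^ i * cZ n m t + \sum_(i < m | bb i) 2 ^ i * 3 * cB n t)%N.
  by rewrite big_split.
rewrite HZ0 HZ1 LX LZ2.
have := LY; have := LZ1.
have lt := ltn_ord i0.
rewrite /cW.
set y1 := \sum_(i < m) _. set y2 := \sum_(i < m) _. set y3 := \sum_(i < m) _.
set z0 := \sum_(i < m | _) _. set z1 := \sum_(i < m | _) _. set z2 := \sum_(i < m | _) _.
clearbody y1 y2 y3 z0 z1 z2.
move: (cB n t) (cZ n m t) (cT m) (cY n t) => B Z T Y.
move: (nat_of_ord i0) lt => i lt.
have [s ->] : exists s, t = (i + 1 + s)%N by exists (t - i.+1); lia.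
move=> h1 h2; rewrite -h2 (_ : (i + 1 + s - i.+1 = s)%N); last by lia.
rewrite (_ : (3 * (i + 1 + s) - 2 = 3 * i + 3 * s + 1)%N); last by lia.
rewrite -h1; nia.
Qed.
Local Open Scope ring_scope.

Definition ee (x : item n m t) : rat :=
  match x with
  | inl (i, j) => (3 * i * cB n t)%N%:R
  | inr (inr (inr (inl (k, l)))) =>
      if (k < l)%N then (2 ^ (k + l) * 9 * n * cB n t)%N%:R
      else (2 ^ (2 * k))%N%:R * (9 / 2) * (n * cB n t)%N%:R
           + (2 ^ k)%N%:R * (3 / 2) * (n * cB n t)%N%:R
  | _ => 0
  end.

Lemma profitE x : profit f a x = (weight f a x)%:R + ee x.
Proof.
case: x => [[i j]|[[k l]|[[k l]|[[k l]|[k|k]]]]]; rewrite /profit /ee /= ?addr0 //.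
- by rewrite natrD.
- by case: (k < l)%N; rewrite ?addrA.
Qed.

Lemma pS_eq : pS f a SS = (wS f a SS)%:R + \sum_(x in SS) ee x.
Proof.
by rewrite /pS /wS natr_sum -big_split; apply: eq_bigr => x _; exact: profitE.
Qed.

Lemma EX :
  \sum_(i < t) \sum_(j < 3 * n | (i == i0) && (j \in J) || (i0 < i)%N) (3 * i * cB n t)%N%:R
  = (n * (3 * i0 * cB n t) + \sum_(i0.+1 <= i < t) (3 * n) * (3 * i * cB n t))%N%:R :> rat.
Proof.
transitivity ((\sum_(i < t) \sum_(j < 3 * n | (i == i0) && (j \in J) || (i0 < i)%N)
   (3 * i * cB n t))%N%:R : rat).
  by rewrite natr_sum; apply: eq_bigr => i _; rewrite natr_sum.
congr (_ %:R).
rewrite (eq_bigr (fun i : 'I_t => (if i == i0 then n * (3 * i0 * cB n t) else 0) +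
   (if i0 < i then 3 * n * (3 * i * cB n t) else 0)))%N.
  rewrite big_split /= -big_mkcond big_pred1_eq.
  by rewrite (ord_tail t i0 (fun i => 3 * n * (3 * i * cB n t)))%N.
move=> i _; case: eqVneq => [->|ne].
  rewrite ltnn /= (eq_bigl (fun j => j \in J)); last by move=> j; rewrite orbF.
  by rewrite sum_nat_const HJ addn0.
rewrite /= add0n; case: ltnP => h.
  by rewrite sum_nat_const card_ord.
by rewrite big_pred0.
Qed.
Local Notation c k := (if bb k then 2 ^ k else 0)%N.

Lemma dbl_split (F G : 'I_m -> 'I_m -> nat) :
  (\sum_(i < m) \sum_(j < m) (F i j + G i j) =
   \sum_(i < m) \sum_(j < m) F i j + \sum_(i < m) \sum_(j < m) G i j)%N.
Proof. by rewrite -big_split; apply: eq_bigr => i _; rewrite big_split. Qed.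

Lemma sq : (i0 * i0 = \sum_(i < m) \sum_(j < m)
   (if i < j then 2 * (c i * c j) else if i == j then c i * c j else 0))%N.
Proof.
rewrite {1 2}i0_bin big_distrl /=.
under eq_bigr do rewrite big_distrr /=.
have E : (\sum_(i < m) \sum_(j < m) (if j < i then c i * c j else 0)
   = \sum_(i < m) \sum_(j < m) (if i < j then c i * c j else 0))%N.
  rewrite exchange_big; apply: eq_bigr => i _; apply: eq_bigr => j _.
  by rewrite mulnC.
transitivity (\sum_(i < m) \sum_(j < m) ((if i < j then c i * c j else 0) +
   (if j < i then c i * c j else 0) + (if i == j then c i * c j else 0)))%N.
  apply: eq_bigr => i _; apply: eq_bigr => j _.
  case: ltngtP => h.
  - have /negbTE -> : i != j by apply: contraTneq h => ->; rewrite ltnn.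
    by rewrite !addn0.
  - have /negbTE -> : i != j by apply: contraTneq h => ->; rewrite ltnn.
    by rewrite add0n addn0.
  - by have Eij : i = j := val_inj h; subst j; rewrite eqxx.
rewrite !dbl_split E -!dbl_split.
apply: eq_bigr => i _; apply: eq_bigr => j _.
case: ltngtP => h.
- have /negbTE -> : i != j by apply: contraTneq h => ->; rewrite ltnn.
  lia.
- have /negbTE -> : i != j by apply: contraTneq h => ->; rewrite ltnn.
  lia.
- by have Eij : i = j := val_inj h; subst j; rewrite eqxx.
Qed.

Lemma Y11nat : (\sum_(i < m) \sum_(j < m | [&& i <= j, bb i & bb j])
   (if i < j then 2 ^ (i + j) * 18 * n * cB n t
    else (2 ^ (2 * i) * 9 + 2 ^ i * 3) * (n * cB n t))
   = (9 * (i0 * i0) + 3 * i0) * (n * cB n t))%N.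
Proof.
rewrite sq i0_bin mulnDl big_distrr big_distrl /= big_distrr big_distrl /=.
rewrite -big_split /=; apply: eq_bigr => i _.
rewrite (_ : (3 * c i * (n * cB n t) = \sum_(j < m) (if i == j then 3 * c i * (n * cB n t) else 0))%N); last first.
  by rewrite -big_mkcond (big_pred1 i) // => j /=; rewrite eq_sym.
rewrite big_distrr big_distrl /= -big_split /= big_mkcond /=.
apply: eq_bigr => j _.
case: ltngtP => h /=.
- have /negbTE -> : i != j by apply: contraTneq h => ->; rewrite ltnn.
  rewrite expnD; case: (bb i); case: (bb j) => //=; nia.
- have /negbTE -> : i != j by apply: contraTneq h => ->; rewrite ltnn.
  lia.
- have Eij : i = j := val_inj h; subst j; rewrite eqxx /=.
  case: (bb i) => //=; rewrite mul2n -addnn expnD; nia.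
Qed.

Definition Y11r : rat := \sum_(i < m) \sum_(j < m | [&& (i <= j)%N, bb i & bb j])
           (if (i < j)%N
            then (2 ^ (i + j) * 9 * n * cB n t)%N%:R
            else
             (2 ^ (2 * i))%N%:R * (9 / 2) * (n * cB n t)%N%:R +
             (2 ^ i)%N%:R * (3 / 2) * (n * cB n t)%N%:R).

Lemma EY : 2 * Y11r = ((9 * (i0 * i0) + 3 * i0) * (n * cB n t))%N%:R.
Proof.
rewrite -Y11nat natr_sum /Y11r mulr_sumr; apply: eq_bigr => i _.
rewrite natr_sum mulr_sumr; apply: eq_bigr => j _.
by case: ltnP => h; rewrite !natrM ?natrD ?natrM; field.
Qed.

Lemma dbl0 (P : 'I_m -> 'I_m -> bool) : \sum_(i < m) \sum_(j < m | P i j) (0 : rat) = 0.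
Proof. by rewrite big1 // => i _; rewrite big1_eq. Qed.

Lemma pS_val : pS f a SS = (cW n m t)%:R +
  (n * (3 * i0 * cB n t) + \sum_(i0.+1 <= i < t) (3 * n) * (3 * i * cB n t))%N%:R + Y11r.
Proof.
rewrite pS_eq wS_eq -addrA; congr (_ + _).
rewrite /SS (eq_bigl sel); last by move=> x; rewrite inE.
rewrite big_sumType big_sumType big_sumType big_sumType big_sumType.
rewrite !sum_pairP /= EX.
by rewrite !big1_eq !dbl0 !add0r addr0.
Qed.

Lemma final_ineq : (cP n m t)%:R <= pS f a SS.
Proof.
rewrite pS_val.
set S1 := (\sum_(i0.+1 <= i < t) i)%N.
have E1 : (\sum_(i0.+1 <= i < t) (3 * n) * (3 * i * cB n t) = 9 * n * cB n t * S1)%N.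
  rewrite /S1 big_distrr /=; apply: eq_bigr => i _; lia.
have lt := ltn_ord i0.
have E2 : 'C(t, 2) = (\sum_(0 <= i < i0.+1) i + S1)%N.
  by rewrite -bin2_sum (@big_cat_nat _ _ _ i0.+1 0 t _ _ (leq0n _) lt).
have E3 := tri i0.
have H : (2 * ('C(t, 2) * 9 * n * cB n t) =
   2 * (n * (3 * i0 * cB n t) + \sum_(i0.+1 <= i < t) (3 * n) * (3 * i * cB n t))
   + (9 * (i0 * i0) + 3 * i0) * (n * cB n t))%N.
  rewrite E1 E2; nia.
have HY := EY.
have HR : 2 * ('C(t, 2) * 9 * n * cB n t)%N%:R =
   2 * (n * (3 * i0 * cB n t) + \sum_(i0.+1 <= i < t) (3 * n) * (3 * i * cB n t))%N%:R
   + ((9 * (i0 * i0) + 3 * i0) * (n * cB n t))%N%:R :> rat.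
  by rewrite -!(natrM _ 2) -natrD H.
rewrite /cP natrD.
lra.
Qed.

End Main.

Theorem lemma7 (n m t : nat) (f : 'I_m * 'I_m -> 'I_(m ^ 2))
  (a : 'I_t -> 'I_(3 * n) -> nat) :
  (1 <= n)%N ->
  t = (2 ^ m)%N ->
  bijective f ->
  (forall i : 'I_t, RSS_instance n (a i)) ->
  (exists i : 'I_t, RSS_yes n (a i)) ->
  exists S : {set item n m t},
    [/\ S \subset [pred x | valid_item x],
        (wS f a S <= cW n m t)%N &
        ((cP n m t)%:R <= pS f a S)%R].
Proof.
move=> hn Ht fbij inst [i0 [_ [J [HJ HJs]]]].
exists (SS n m t i0 J); split.
- exact: S_valid.
- by rewrite (wS_eq _ _ _ _ _ Ht fbij inst i0 J HJ HJs).
- exact: (final_ineq _ _ _ _ _ Ht fbij inst i0 J HJ HJs).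
Qed.
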